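(* Let $\langle A,k_1,\dots,k_{i_A}\rangle$ and $\langle B,\lambda_1,\dots,\lambda_{i_B}\rangle$ be parameterized problems such that $\langle A,k_1,\dots,k_{i_A}\rangle\le_{PFG}\langle B,\lambda_1,\dots,\lambda_{i_B}\rangle$ via mappings $g_j$, and let $\Lambda\subseteq\{\lambda_1,\dots,\lambda_{i_B}\}$ be such that $FPI(B,\Lambda)$. Then $FPI(A,K_\Lambda)$, where $K_\Lambda$ is the minimum necessary set of $\Lambda$ with respect to $g$.
   Context: Problems $A,B$ have conjectured best running times $a(n),b(n)$. A parameterized problem $\langle L,k_1,\dots,k_\ell\rangle$ is a language $L$ with computable parameterization functions $k_i$ from inputs to $\mathbb{N}$. PFGR: $\langle A,k_1,\dots,k_{i_A}\rangle\le_{PFG}\langle B,\lambda_1,\dots,\lambda_{i_B}\rangle$ if there is an algorithm $R$ such that (1) for every $\varepsilon>0$ there is $\delta>0$ such that $R$ runs in $a^{1-\delta}(n)$ time on inputs $I_A$ of length $n$, making $q$ queries to $\langle B\rangle$ of lengths $n_1,\dots,n_q$ with $\sum_{i=1}^q b^{1-\varepsilon}(n_i)\le c\cdot a^{1-\delta}(n)$ for a constant $c>0$, and $R$ accepts iff $I_A\in\langle A\rangle$; and (2) for each query $q_j$ there is a computable $g_j=(g_{j,1},\dots,g_{j,i_B}):\mathbb{N}^{i_A}\to\mathbb{N}^{i_B}$ with $\lambda_i\le g_{j,i}(k_1,\dots,k_{i_A})$ for every $i$ (parameters of the $j$-th query instance bounded in terms of the parameters of $I_A$). FPI: for a set $K=\{k_1,\dots,k_x\}$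 of parameters of a problem $A$, $FPI(A,K)$ means there is an algorithm solving $A$ in time $O(a^{1-\varepsilon}(n)f(k_1,\dots,k_x))$ for some $\varepsilon>0$ and computable $f$. Minimum necessary set: $K_\Lambda$ is the minimum set $\{k_1,\dots,k_x\}$ of parameters of $A$ needed to bound the parameters in $\Lambda$ through $g$, i.e., such that there is a computable function $h$ with $g_{j,i}(k_1,\dots,k_{i_A})\le h(k_1,\dots,k_x)$ for the parameters $\lambda_i\in\Lambda$ and all $j\in[q]$. *)

(* Defs.v *)
From Stdlib Require Import Reals.
From mathcomp Require Import all_boot.

Set Implicit Arguments.
Unset Strict Implicit.
Unset Printing Implicit Defensive.

Definition vcons n (x : nat) (v : 'I_n -> nat) : 'I_n.+1 -> nat :=
  fun i => match unlift ord0 i with None => x | Some j => v j end.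

Inductive prf : nat -> Type :=
| PZero n : prf n
| PSucc : prf 1
| PProj n (i : 'I_n) : prf n
| PComp m n (g : prf m) (fs : 'I_m -> prf n) : prf n
| PRec n (b : prf n) (s : prf n.+2) : prf n.+1
| PMin n (f : prf n.+1) : prf n.

Inductive peval : forall n, prf n -> ('I_n -> nat) -> nat -> Prop :=
| evZero n v : peval (PZero n) v 0
| evSucc v : peval PSucc v (v ord0).+1
| evProj n (i : 'I_n) v : peval (PProj i) v (v i)
| evComp m n (g : prf m) (fs : 'I_m -> prf n) v ys r :
    (forall i, peval (fs i) v (ys i)) -> peval g ys r -> peval (PComp g fs) v r
| evRec0 n (b : prf n) (s : prf n.+2) v r :
    peval b v r -> peval (PRec b s) (vcons 0 v) r
| evRecS n (b : prf n) (s : prf n.+2) v y r r' :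
    peval (PRec b s) (vcons y v) r ->
    peval s (vcons y (vcons r v)) r' -> peval (PRec b s) (vcons y.+1 v) r'
| evMin n (f : prf n.+1) v y :
    peval f (vcons y v) 0 ->
    (forall z, z < y -> exists r, r <> 0 /\ peval f (vcons z v) r) ->
    peval (PMin f) v y.

Definition computable n (f : ('I_n -> nat) -> nat) : Prop :=
  exists c : prf n, forall v, peval c v (f v).

(* inputs are binary strings; injective encoding of strings as naturals *)
Definition code (s : seq bool) : nat := foldr (fun (bt : bool) (m : nat) => m.*2 + bt) 1 s.

Definition computable_inp (k : seq bool -> nat) : Prop :=
  exists F, computable F /\ forall s : seq bool, F (fun _ : 'I_1 => code s) = k s.

Definition depends_only n (K : {set 'I_n}) (f : ('I_n -> nat) -> nat) : Prop :=
  forall v w, (forall t, t \in K -> v t = w t) -> f v = f w.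

Definition lang := seq bool -> bool.

Delimit Scope nat_scope with N.
Local Open Scope R_scope.

Record Model := {
  Alg : Type;
  (* output, running time (own steps), and the sequence of oracle queries
     q_1,...,q_q made by an algorithm on input x with oracle O *)
  out : Alg -> (seq bool -> bool) -> seq bool -> bool;
  time : Alg -> (seq bool -> bool) -> seq bool -> nat;
  queries : Alg -> (seq bool -> bool) -> seq bool -> seq (seq bool)
}.

(* trivial oracle: a plain (oracle-free) algorithm is run with it and
   makes no queries *)
Definition noO : seq bool -> bool := fun _ => false.

Definition plain (M : Model) (S : Alg M) : Prop :=
  forall x, queries S noO x = [::].

(* Oracle substitution: replacing each oracle call of R by a run of the
   plain algorithm S yields a plain algorithm whose time is (up to a
   constant) the time of R plus the time of S on the queries. *)
Definition oracle_substitution (M : Model) : Prop :=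
  forall (Ro S : Alg M), plain S ->
  exists (T : Alg M) (kappa : R),
    plain T /\
    forall x,
      out T noO x = out Ro (out S noO) x /\
      INR (time T noO x) <=
        kappa * INR (time Ro (out S noO) x +
                      \sum_(q <- queries Ro (out S noO) x) time S noO q)%N.

Definition Rsum_seq (s : seq R) : R := foldr Rplus 0 s.

Definition FPI (M : Model) (a : nat -> R) (L : lang) (iL : nat)
    (kap : 'I_iL -> seq bool -> nat) (K : {set 'I_iL}) : Prop :=
  exists (S : Alg M) (eps : R) (f : ('I_iL -> nat) -> nat) (C : R),
    0 < eps /\ computable f /\ depends_only K f /\ plain S /\
    forall x,
      out S noO x = L x /\
      INR (time S noO x) <=
         C * Rpower (a (size x)) (1 - eps) * INR (f (fun t => kap t x)).

Definition PFG_reduces (M : Model) (a b : nat -> R)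
    (A : lang) (iA : nat) (k : 'I_iA -> seq bool -> nat)
    (B : lang) (iB : nat) (lam : 'I_iB -> seq bool -> nat)
    (g : nat -> ('I_iA -> nat) -> 'I_iB -> nat) : Prop :=
  (forall j (i : 'I_iB), computable (fun v => g j v i)) /\
  exists Ro : Alg M,
    (forall x, out Ro B x = A x) /\
    (forall x j, (j < size (queries Ro B x))%N ->
       forall i : 'I_iB,
         (lam i (nth [::] (queries Ro B x) j) <= g j (fun t => k t x) i)%N) /\
    (forall eps : R, 0 < eps ->
       exists delta : R, 0 < delta /\
       exists C c : R, 0 < c /\
       forall x,
         INR (time Ro B x) <= C * Rpower (a (size x)) (1 - delta) /\
         Rsum_seq [seq Rpower (b (size q)) (1 - eps) | q <- queries Ro B x]
            <= c * Rpower (a (size x)) (1 - delta)).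

Definition necessary_set (iA iB : nat) (g : nat -> ('I_iA -> nat) -> 'I_iB -> nat)
    (Lam : {set 'I_iB}) (K : {set 'I_iA}) : Prop :=
  exists h : ('I_iA -> nat) -> nat,
    computable h /\ depends_only K h /\
    forall j v (i : 'I_iB), i \in Lam -> (g j v i <= h v)%N.

Definition minimum_necessary_set (iA iB : nat)
    (g : nat -> ('I_iA -> nat) -> 'I_iB -> nat)
    (Lam : {set 'I_iB}) (K : {set 'I_iA}) : Prop :=
  necessary_set g Lam K /\
  forall K' : {set 'I_iA}, necessary_set g Lam K' -> (#|K| <= #|K'|)%N.

(* Main.v *)
Require Import Defs.
From Stdlib Require Import Reals Lra.
From Stdlib Require Import ClassicalEpsilon FunctionalExtensionality.
From mathcomp Require Import all_boot.

Set Implicit Arguments.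
Unset Strict Implicit.
Unset Printing Implicit Defensive.

Definition vtl n (w : 'I_n.+1 -> nat) : 'I_n -> nat := fun j => w (lift ord0 j).

Lemma vcons0 n x (v : 'I_n -> nat) : vcons x v ord0 = x.
Proof. by rewrite /vcons unlift_none. Qed.

Lemma vconsS n x (v : 'I_n -> nat) j : vcons x v (lift ord0 j) = v j.
Proof. by rewrite /vcons liftK. Qed.

Lemma vtl_vcons n x (v : 'I_n -> nat) : vtl (vcons x v) = v.
Proof. apply: functional_extensionality => j; exact: vconsS. Qed.

Lemma vcons_eta n (w : 'I_n.+1 -> nat) : vcons (w ord0) (vtl w) = w.
Proof.
apply: functional_extensionality => i.
case: (unliftP ord0 i) => [j ->|->]; by rewrite ?vconsS ?vcons0.
Qed.

Lemma comp_ext n (f g : ('I_n -> nat) -> nat) :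
  computable f -> (forall v, f v = g v) -> computable g.
Proof. move=> [c Hc] E; exists c => v; rewrite -E; exact: Hc. Qed.

Lemma comp_c m n (G : ('I_m -> nat) -> nat) (Fs : 'I_m -> ('I_n -> nat) -> nat) :
  computable G -> (forall i, computable (Fs i)) ->
  computable (fun v => G (fun i => Fs i v)).
Proof.
move=> [cg Hg] HF.
exists (PComp cg (fun i => proj1_sig (constructive_indefinite_description _ (HF i)))).
move=> v; apply: (@evComp _ _ _ _ v (fun i => Fs i v)); last exact: Hg.
move=> i; exact: (proj2_sig (constructive_indefinite_description _ (HF i))).
Qed.

Lemma proj_c n (i : 'I_n) : computable (fun v => v i).
Proof. exists (PProj i) => v; constructor. Qed.

Lemma zero_c n : computable (fun _ : 'I_n -> nat => 0).
Proof. exists (PZero n) => v; constructor. Qed.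

Lemma succ_c n (F : ('I_n -> nat) -> nat) : computable F -> computable (fun v => (F v).+1).
Proof.
move=> HF.
have H1 : computable (fun v : 'I_1 -> nat => (v ord0).+1).
  exists PSucc => v; constructor.
exact: (comp_c (Fs := fun _ => F) H1 (fun _ => HF)).
Qed.

Lemma compv n k (chi : ('I_n.+1 -> nat) -> nat) (F0 : ('I_k -> nat) -> nat)
  (Fs : 'I_n -> ('I_k -> nat) -> nat) :
  computable chi -> computable F0 -> (forall j, computable (Fs j)) ->
  computable (fun v => chi (vcons (F0 v) (fun j => Fs j v))).
Proof.
move=> Hc H0 Hs.
apply: (comp_c (Fs := fun i v => vcons (F0 v) (fun j => Fs j v) i) Hc) => i.
case: (unliftP ord0 i) => [j ->|->].
  by apply: (comp_ext (Hs j)) => v; rewrite vconsS.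
by apply: (comp_ext H0) => v; rewrite vcons0.
Qed.

Fixpoint precf n (bf : ('I_n -> nat) -> nat) (sf : ('I_n.+2 -> nat) -> nat) y v :=
  match y with 0 => bf v | y'.+1 => sf (vcons y' (vcons (precf bf sf y' v) v)) end.

Lemma rec_c n (bf : ('I_n -> nat) -> nat) (sf : ('I_n.+2 -> nat) -> nat) :
  computable bf -> computable sf ->
  computable (fun w : 'I_n.+1 -> nat => precf bf sf (w ord0) (vtl w)).
Proof.
move=> [cb Hb] [cs Hs].
have aux : forall y v, peval (PRec cb cs) (vcons y v) (precf bf sf y v).
  elim=> [|y IH] v /=; first by constructor.
  apply: (@evRecS _ _ _ _ _ (precf bf sf y v)); [exact: IH | exact: Hs].
exists (PRec cb cs) => w; have := aux (w ord0) (vtl w); by rewrite vcons_eta.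
Qed.

Lemma add_c n (F1 F2 : ('I_n -> nat) -> nat) :
  computable F1 -> computable F2 -> computable (fun v => F1 v + F2 v).
Proof.
move=> H1 H2.
have Hadd : computable (fun w : 'I_1.+1 -> nat => w ord0 + vtl w ord0).
  have Hb : computable (fun v : 'I_1 -> nat => v ord0) by exact: proj_c.
  have Hs : computable (fun u : 'I_3 -> nat => (u (lift ord0 ord0)).+1).
    exact: succ_c (proj_c _).
  apply: (comp_ext (rec_c Hb Hs)) => w.
  move: (w ord0) (vtl w) => y v; elim: y => [|y IH] //=.
  by rewrite vconsS vcons0 IH.
apply: (comp_ext (compv Hadd H1 (fun _ => H2))) => v.
by rewrite /vtl vcons0 vconsS.
Qed.

Lemma bsum_c n (chi : ('I_n.+1 -> nat) -> nat) : computable chi ->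
  computable (fun w : 'I_n.+1 -> nat => \sum_(i < (w ord0).+1) chi (vcons i (vtl w))).
Proof.
move=> Hc.
set bf := fun v : 'I_n -> nat => chi (vcons 0 v).
set sf := fun u : 'I_n.+2 -> nat => u (lift ord0 ord0) + chi (vcons (u ord0).+1 (vtl (vtl u))).
have Hb : computable bf.
  exact: (compv (Fs := fun j v => v j) Hc (zero_c _) (@proj_c _)).
have Hs : computable sf.
  apply: add_c; first exact: proj_c.
  exact: (compv (Fs := fun j (u : 'I_n.+2 -> nat) => u (lift ord0 (lift ord0 j)))
            Hc (succ_c (proj_c _)) (fun j => proj_c _)).
apply: (comp_ext (rec_c Hb Hs)) => w.
move: (w ord0) (vtl w) => y v; elim: y => [|y IH] /=.
  by rewrite big_ord1.
rewrite /sf vconsS vcons0 IH !vtl_vcons vcons0 [in RHS]big_ord_recr /=.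
by [].
Qed.
Definition upd m (u : 'I_m -> nat) (i : 'I_m) (y : nat) : 'I_m -> nat :=
  fun i' => if i' == i then y else u i'.

Lemma op_c m (j : 'I_m) (phi : ('I_m.+1 -> nat) -> nat) : computable phi ->
  computable (fun u => \sum_(y < (u ord0).+1) phi (upd u (lift ord0 j) y)).
Proof.
move=> Hp.
set chi := fun z : 'I_m.+2 -> nat => phi (upd (vtl z) (lift ord0 j) (z ord0)).
have Hc : computable chi.
  apply: (comp_c (Fs := fun i (z : 'I_m.+2 -> nat) => upd (vtl z) (lift ord0 j) (z ord0) i) Hp) => i.
  rewrite /upd; case: (i == lift ord0 j); exact: proj_c.
apply: (comp_ext (compv (Fs := fun j (u : 'I_m.+1 -> nat) => u j) (bsum_c Hc) (proj_c ord0) (@proj_c _))) => u.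
rewrite vcons0 vtl_vcons; apply: eq_bigr => i _.
by rewrite /chi vtl_vcons vcons0.
Qed.

Lemma box_seq m (phi : ('I_m.+1 -> nat) -> nat) : computable phi ->
  forall s : seq 'I_m, exists psi, computable psi /\
  forall u u', u' ord0 = u ord0 ->
    (forall j, j \notin s -> u' (lift ord0 j) = u (lift ord0 j)) ->
    (forall j, j \in s -> u' (lift ord0 j) <= u ord0) -> phi u' <= psi u.
Proof.
move=> Hp; elim=> [|j s [psi [Hpsi IH]]].
  exists phi; split => // u u' E0 Ej _.
  have -> : u' = u; last by [].
  apply: functional_extensionality => i.
  case: (unliftP ord0 i) => [j ->|->] //; exact: Ej.
exists (fun u => \sum_(y < (u ord0).+1) psi (upd u (lift ord0 j) y)).
split; first exact: op_c.
move=> u u' E0 Ej Hj.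
have Hy : u' (lift ord0 j) < (u ord0).+1 by rewrite ltnS Hj // mem_head.
apply: (@leq_trans (psi (upd u (lift ord0 j) (u' (lift ord0 j))))).
  apply: IH.
  - by rewrite /upd (negbTE (neq_lift _ _)).
  - move=> j' Hj'; rewrite /upd (inj_eq (@lift_inj _ ord0)).
    case: eqP => [-> //|/eqP Hne]; apply: Ej.
    by rewrite in_cons negb_or Hne.
  - move=> j' Hj'; rewrite /upd (negbTE (neq_lift _ _)) Hj // in_cons Hj' orbT //.
rewrite (bigD1 (Ordinal Hy)) //=; exact: leq_addr.
Qed.

Lemma box_bound m (f : ('I_m -> nat) -> nat) : computable f ->
  exists Psi : nat -> nat,
   (forall n (h : ('I_n -> nat) -> nat), computable h -> computable (fun v => Psi (h v))) /\
   (forall H w, (forall i, w i <= H) -> f w <= Psi H).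
Proof.
move=> Hf.
have Hp : computable (fun u : 'I_m.+1 -> nat => f (vtl u)).
  exact: (comp_c (Fs := fun j (u : 'I_m.+1 -> nat) => u (lift ord0 j)) Hf (fun j => proj_c _)).
have [psi [Hpsi Hb]] := box_seq Hp (enum 'I_m).
exists (fun H => psi (vcons H (fun _ => 0))); split.
  move=> n h Hh; exact: (compv (Fs := fun _ _ => 0) Hpsi Hh (fun _ => zero_c _)).
move=> H w Hw.
have := Hb (vcons H (fun _ => 0)) (vcons H w).
rewrite vtl_vcons; apply; rewrite ?vcons0 // => j.
  by rewrite mem_enum.
by rewrite vconsS.
Qed.
Local Open Scope R_scope.
Lemma sum_bound (s : seq (seq bool)) (tf : seq bool -> nat) (X : seq bool -> R) (K : R) :
  (forall q, q \in s -> (INR (tf q) <= K * X q)) ->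
  (INR (\sum_(q <- s) tf q) <= K * Rsum_seq [seq X q | q <- s]).
Proof.
elim: s => [|q s IH] H.
  rewrite big_nil /=; lra.
rewrite big_cons plus_INR /=.
have h1 := H q (mem_head _ _).
have h2 : (INR (\sum_(q <- s) tf q) <= K * Rsum_seq [seq X q | q <- s]).
  apply: IH => q' Hq'; apply: H; by rewrite in_cons Hq' orbT.
rewrite Rmult_plus_distr_l; lra.
Qed.

Lemma Rpower_pos x y : (0 < Rpower x y).
Proof. rewrite /Rpower; exact: exp_pos. Qed.

Theorem mainTheorem4 (M : Model) (HM : oracle_substitution M)
    (a b : nat -> R) (ha : forall n, Rlt 0 (a n)) (hb : forall n, Rlt 0 (b n))
    (A : lang) (iA : nat) (k : 'I_iA -> seq bool -> nat)
    (hk : forall t, computable_inp (k t))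
    (B : lang) (iB : nat) (lam : 'I_iB -> seq bool -> nat)
    (hlam : forall t, computable_inp (lam t))
    (g : nat -> ('I_iA -> nat) -> 'I_iB -> nat)
    (Hred : PFG_reduces M a b A k B lam g)
    (Lam : {set 'I_iB}) (HB : FPI M b B lam Lam)
    (K : {set 'I_iA}) (HK : minimum_necessary_set g Lam K) :
  FPI M a A k K.
Proof.
move: Hred => [Hgc [Ro [Hout [Hq Htime]]]].
move: HB => [S [epsB [f [CB [HepsB [Hfc [Hfdep [HSpl HS]]]]]]]].
move: HK => [[h [Hhc [Hhdep Hh]]] _].
have [Psi [HPc HPb]] := box_bound Hfc.
have [delta [Hdelta [C [c [Hc Hx]]]]] := Htime epsB HepsB.
have [T [kappa [HTpl HT]]] := HM Ro S HSpl.
have ESB : out S noO = B.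
  by apply: functional_extensionality => x; case: (HS x).
exists T, delta, (fun v => (Psi (h v)).+1),
  (Rmax kappa 0 * (Rmax C 0 + Rmax CB 0 * c)).
split => //; split; first exact: succ_c (HPc _ _ Hhc).
split; first by move=> v w E /=; rewrite (Hhdep v w E).
split => // x.
have [HTo HTt] := HT x; rewrite ESB in HTo HTt.
split; first by rewrite HTo Hout.
set P := Psi (h (fun t => k t x)).
set A' := Rpower (a (size x)) (1 - delta).
have HA' : (0 < A') by exact: Rpower_pos.
have [HRo Hsum] := Hx x.
have Hqb : forall q, q \in queries Ro B x ->
    (INR (time S noO q) <= (Rmax CB 0 * INR P) * Rpower (b (size q)) (1 - epsB)).
  move=> q Hqin.
  have Hj : (index q (queries Ro B x) < size (queries Ro B x))%N by rewrite index_mem.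
  have Eq := nth_index [::] Hqin.
  have Hf : (f (fun t => lam t q) <= P)%N.
    set w := fun i => if i \in Lam then lam i q else 0%N.
    have -> : f (fun t => lam t q) = f w by apply: Hfdep => t Ht; rewrite /w Ht.
    apply: HPb => i; rewrite /w; case: ifP => Hi //.
    apply: leq_trans (Hh (index q (queries Ro B x)) _ i Hi).
    by have := Hq x _ Hj i; rewrite Eq.
  have [_ HSt] := HS q.
  apply: Rle_trans HSt _.
  have HX := Rpower_pos (b (size q)) (1 - epsB).
  have HF : (INR (f (fun t => lam t q)) <= INR P) by apply: le_INR; apply/leP.
  have HF0 := pos_INR (f (fun t => lam t q)).
  have HM1 := Rmax_l CB 0. have HM2 := Rmax_r CB 0.
  set X := Rpower _ _ in HX *.
  set F := INR _ in HF HF0 *.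
  set Mb := Rmax CB 0 in HM1 HM2 *.
  have e1 : (CB * X * F <= Mb * X * F).
    apply: Rmult_le_compat_r => //; apply: Rmult_le_compat_r; lra.
  have e2 : (Mb * X * F <= Mb * X * INR P).
    apply: Rmult_le_compat_l => //; apply: Rmult_le_pos; lra.
  lra.
have HS2 := sum_bound Hqb.
move: HTt; rewrite plus_INR => HTt.
have HP0 := pos_INR P.
have Hs0 := pos_INR (\sum_(q <- queries Ro B x) time S noO q).
have Hr0 := pos_INR (time Ro B x).
have HMk1 := Rmax_l kappa 0. have HMk2 := Rmax_r kappa 0.
have HMC1 := Rmax_l C 0. have HMC2 := Rmax_r C 0.
have HMB2 := Rmax_r CB 0.
set N := (INR (time Ro B x) + INR (\sum_(q <- queries Ro B x) time S noO q)) in HTt *.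
set Rs := Rsum_seq _ in HS2 Hsum.
have h1 : (INR (time T noO x) <= Rmax kappa 0 * N).
  apply: Rle_trans HTt _; apply: Rmult_le_compat_r; rewrite /N; lra.
have hMP : (0 <= Rmax CB 0 * INR P) by apply: Rmult_le_pos.
have h2 : (Rmax CB 0 * INR P * Rs <= Rmax CB 0 * INR P * (c * A')).
  by apply: Rmult_le_compat_l.
have h3 : (C * A' <= Rmax C 0 * A') by apply: Rmult_le_compat_r; lra.
have hcA : (0 <= c * A') by apply: Rmult_le_pos; lra.
have h4 : (0 <= Rmax C 0 * A' * INR P) by apply: Rmult_le_pos => //; apply: Rmult_le_pos; lra.
have h5 : (0 <= Rmax CB 0 * (c * A')) by apply: Rmult_le_pos.
have h6 : (N <= (Rmax C 0 + Rmax CB 0 * c) * A' * (INR P + 1)).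
  rewrite /N.
  have -> : ((Rmax C 0 + Rmax CB 0 * c) * A' * (INR P + 1) =
     Rmax C 0 * A' * INR P + Rmax C 0 * A' + Rmax CB 0 * INR P * (c * A') + Rmax CB 0 * (c * A')) by ring.
  rewrite -/A' in HRo; lra.
rewrite S_INR.
apply: Rle_trans h1 _.
have -> : (Rmax kappa 0 * (Rmax C 0 + Rmax CB 0 * c) * A' * (INR P + 1) =
   Rmax kappa 0 * ((Rmax C 0 + Rmax CB 0 * c) * A' * (INR P + 1))) by ring.
by apply: Rmult_le_compat_l.
Qed.
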